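(* Let $k\ge2$ and $p=p(n)\in[0,1]$. For every $\varepsilon>0$, with probability tending to $1$ as $n\to\infty$, the random cochain $a$ used to construct $Y^k(n,p)$ is a $\mathbb Z_2$-cocycle of $Y^k(n,p)$ (i.e. $\delta a=0$) and satisfies $\|[a]\|\ge\frac12-\varepsilon$; in particular $\tilde H^{k-1}(Y^k(n,p);\mathbb Z_2)\ne0$.
   Context: $Y^k(n,p)$ is the random $k$-dimensional complex on vertex set $[n]$ with complete $(k-1)$-skeleton constructed as follows: choose $a:\binom{[n]}{k}\to\mathbb Z_2$ with values independent and uniform; call $H\in\binom{[n]}{k+1}$ good if $H$ contains an even number of $k$-subsets $F$ with $a(F)=1$; each good $H$ is added as a $k$-face independently with probability $p$. Faces are oriented by a fixed vertex order; over $\mathbb Z_2$ the coboundary is $(\delta f)(H)=\sum_{G\subset H,|G|=|H|-1}f(G)$. For $f\in C^{i}(X;\mathbb Z_2)$, $\|f\|=|\{F\in X_i:f(F)=1\}|/|X_i|$ and $\|[f]\|=\min\{\|f+\delta g\|:g\in C^{i-1}(X;\mathbb Z_2)\}$. *)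

(* Defs.v *)
From HB Require Import structures.
From mathcomp Require Import all_boot all_order all_algebra.
Set Implicit Arguments. Unset Strict Implicit. Unset Printing Implicit Defensive.
Import Order.TTheory GRing.Theory Num.Theory.
Local Open Scope ring_scope.

(* j-element subsets of the vertex set [n] = 'I_n, i.e. the (j-1)-faces. *)
Notation ksub n j := {S : {set 'I_n} | #|S| == j}.

(* Z_2-cochains on (j-1)-faces are boolean functions on j-subsets.
   Coboundary from cochains on j-subsets to functions on l-subsets
   (used with l = j+1): (delta g)(F) = sum_{G subset F} g(G) mod 2. *)
Definition cobound (n j l : nat) (g : {ffun ksub n j -> bool}) :
  {ffun ksub n l -> bool} :=
  [ffun F : ksub n l => \big[addb/false]_(G : ksub n j | val G \subset val F) g G].

Definition good (n k : nat) (a : {ffun ksub n k -> bool}) : {set ksub n k.+1} :=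
  [set H : ksub n k.+1 | ~~ odd #|[set F : ksub n k | (val F \subset val H) && a F]|].

(* Probability of the outcome (a, X) where X is the set of k-faces of
   Y^k(n,p): a uniform, each good H kept independently with prob. p. *)
Definition weight (R : realFieldType) (n k : nat) (p : R)
  (a : {ffun ksub n k -> bool}) (X : {set ksub n k.+1}) : R :=
  (2%:R^-1) ^+ #|{: ksub n k}| *
  (if X \subset good a
   then p ^+ #|X| * (1 - p) ^+ (#|good a| - #|X|)
   else 0).

Definition Prob (R : realFieldType) (n k : nat) (p : R)
  (E : {ffun ksub n k -> bool} -> {set ksub n k.+1} -> bool) : R :=
  \sum_(a : {ffun ksub n k -> bool}) \sum_(X : {set ksub n k.+1})
     weight p a X * (E a X)%:R.

Definition cocycle_on (n k : nat) (X : {set ksub n k.+1})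
  (f : {ffun ksub n k -> bool}) : bool :=
  [forall H in X, @cobound n k k.+1 f H == false].

(* normalized Hamming norm on C^{k-1}: all k-subsets are (k-1)-faces. *)
Definition cnorm (R : realFieldType) (n k : nat) (f : {ffun ksub n k -> bool}) : R :=
  #|[set F | f F]|%:R / #|{: ksub n k}|%:R.

Definition addc (n k : nat) (f g : {ffun ksub n k -> bool}) : {ffun ksub n k -> bool} :=
  [ffun F => f F (+) g F].

(* ||[f]|| = min over g in C^{k-2} of ||f + delta g|| (norms are <= 1). *)
Definition classnorm (R : realFieldType) (n k : nat) (f : {ffun ksub n k -> bool}) : R :=
  \big[Order.min/1]_(g : {ffun ksub n k.-1 -> bool})
     @cnorm R n k (addc f (@cobound n k.-1 k g)).

(* reduced H^{k-1}(Y; Z_2) <> 0 (k >= 2): a cocycle that is not a coboundary. *)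
Definition Hnonzero (n k : nat) (X : {set ksub n k.+1}) : bool :=
  [exists f : {ffun ksub n k -> bool},
     cocycle_on X f && [forall g : {ffun ksub n k.-1 -> bool}, f != @cobound n k.-1 k g]].

(* Main.v *)
Require Import Defs.
From HB Require Import structures.
From mathcomp Require Import all_boot all_order all_algebra.
From mathcomp Require Import zify ring lra.
Set Implicit Arguments. Unset Strict Implicit. Unset Printing Implicit Defensive.

Lemma bern_up s n : s ^ n * (s + n) <= (s.+1) ^ n * s.
Proof.
elim: n => [|n IH]; first by rewrite !expn0 addn0.
rewrite !expnS.
move: IH; move: (s ^ n) (s.+1 ^ n) => X Y IH.
have e1 : s * X * (s + n.+1) <= s.+1 * (X * (s + n)).
  have -> : s * X * (s + n.+1) = X * (s * (s + n.+1)) by ring.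
  have -> : s.+1 * (X * (s + n)) = X * (s.+1 * (s + n)) by ring.
  rewrite leq_mul2l; apply/orP; right.
  have -> : s.+1 * (s + n) = s * (s + n.+1) + n by ring.
  exact: leq_addr.
apply: (leq_trans e1).
have -> : s.+1 * Y * s = s.+1 * (Y * s) by ring.
by rewrite leq_mul2l IH orbT.
Qed.

Lemma aux_sub t j : t.+1 * (t - j) <= t * (t.+1 - j).
Proof.
case: (leqP j t) => h.
  have [d ->] : exists d, t = d + j by exists (t - j); rewrite subnK.
  rewrite addnK -addSn addnK.
  have -> : (d + j) * d.+1 = (d + j).+1 * d + j by ring.
  exact: leq_addr.
by rewrite (eqnP (ltnW h)) muln0.
Qed.

Lemma bern_down t j : t ^ j * (t - j) <= t * (t.-1) ^ j.
Proof.
elim: j => [|j IH]; first by rewrite !expn0 subn0 mul1n muln1.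
rewrite !expnS.
case: t IH => [|t] IH /=; first by rewrite mul0n.
move: IH; move: (t.+1 ^ j) (t ^ j) => X Y IH.
rewrite subSS.
have e1 : t.+1 * X * (t - j) <= t * (X * (t.+1 - j)).
  have -> : t.+1 * X * (t - j) = X * (t.+1 * (t - j)) by ring.
  have -> : t * (X * (t.+1 - j)) = X * (t * (t.+1 - j)) by ring.
  by rewrite leq_mul2l aux_sub orbT.
apply: (leq_trans e1).
have -> : t.+1 * (t * Y) = t * (t.+1 * Y) by ring.
by rewrite leq_mul2l IH orbT.
Qed.

Lemma key_poly m s y : 4 <= m -> s.+1 = 2 * m * m -> y + m = s + 3 ->
  s.+1 * (s + m) < y * (s + 2 * m).
Proof.
move=> hm hs hy.
have [q qE] : exists q, m = q + 4 by exists (m - 4); rewrite subnK.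
subst m.
have es : s = 2 * q * q + 16 * q + 31.
  by apply: (@addIn 1); rewrite !addn1 hs; ring.
have ey : y = 2 * q * q + 15 * q + 30.
  by apply: (@addIn (q + 4)); rewrite hy es; ring.
subst s y.
set L := _ * _.
have -> : (2 * q * q + 15 * q + 30) * (2 * q * q + 16 * q + 31 + 2 * (q + 4))
  = L + (2 * q * q + 21 * q + 49).+1 by rewrite /L; ring.
by rewrite addnS ltnS leq_addr.
Qed.

Lemma combine d c a b t s x m : 0 < m -> 0 < d -> 0 < b -> t = s.+1 ->
  d * x <= t * c -> a * (s + m + m) <= b * s -> t * (s + m) < x * (s + m + m) ->
  d * (a + b) < 2 * (c * b).
Proof.
move=> mp dp bp -> h1 h2 key.
have P : 0 < s.+1 * (s + m + m) by rewrite muln_gt0 /=; lia.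
rewrite -(ltn_pmul2r P).
have e1 : d * (a + b) * (s.+1 * (s + m + m)) <= 2 * (d * b * (s.+1 * (s + m))).
  have := leq_mul (leqnn (d * s.+1)) h2.
  have -> : d * (a + b) * (s.+1 * (s + m + m)) = d * s.+1 * (a * (s + m + m)) + d * s.+1 * (b * (s + m + m)) by ring.
  have -> : 2 * (d * b * (s.+1 * (s + m))) = d * s.+1 * (b * s) + d * s.+1 * (b * (s + m + m)) by ring.
  by move=> h; rewrite leq_add2r.
have e2 : 2 * (d * b * (x * (s + m + m))) <= 2 * (c * b) * (s.+1 * (s + m + m)).
  have := leq_mul (leqnn (2 * b * (s + m + m))) h1.
  have -> : 2 * (d * b * (x * (s + m + m))) = 2 * b * (s + m + m) * (d * x) by ring.
  have -> : 2 * (c * b) * (s.+1 * (s + m + m)) = 2 * b * (s + m + m) * (s.+1 * c) by ring.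
  done.
have e3 : 2 * (d * b * (s.+1 * (s + m))) < 2 * (d * b * (x * (s + m + m))).
  by rewrite ltn_pmul2l // ltn_pmul2l ?muln_gt0 ?dp.
exact: leq_ltn_trans e1 (leq_trans e3 e2).
Qed.

Lemma keyAB m t : 4 <= m -> t = 2 * m * m ->
  t ^ (m - 2) * ((t.-1) ^ (2 * m) + t ^ (2 * m)) < 2 * ((t.-1) ^ (m - 2) * t ^ (2 * m)).
Proof.
move=> hm tE.
have m0 : 0 < m by apply: leq_trans hm.
have ht : 0 < t by rewrite tE !muln_gt0 m0.
have h1 := bern_down t (m - 2).
have h2 := bern_up t.-1 (2 * m).
rewrite prednK // in h2.
have e : t = (t.-1).+1 by rewrite prednK.
apply: (combine (t := t) (s := t.-1) (x := t - (m - 2)) (m := m)).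
- lia.
- by rewrite expn_gt0 ht.
- by rewrite expn_gt0 ht.
- exact: e.
- exact: h1.
- have -> : t.-1 + m + m = t.-1 + 2 * m by lia.
  exact: h2.
- rewrite {1}e; have -> : t.-1 + m + m = t.-1 + 2 * m by lia.
  apply: key_poly => //; first by rewrite -e.
  have : m <= t by rewrite tE mulnC leq_pmulr // muln_gt0 m0.
  lia.
Qed.

Lemma leq_expr x y e : x <= y -> x ^ e <= y ^ e.
Proof. by case: e => [|e] h; rewrite ?expn0 // leq_exp2r. Qed.

Lemma asym A B K M N : 0 < A -> A < B -> 3 * A * M <= N -> K <= M ->
  K * 2 ^ M * A ^ N <= B ^ N.
Proof.
move=> Ap AB hN hK.
set L := 3 * A.
have h4 : 4 * A ^ L <= B ^ L.
  have h := bern_up A (3 * A).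
  have e4 : A + 3 * A = 4 * A by lia.
  rewrite e4 in h.
  apply: (leq_trans (n := A.+1 ^ (3 * A))); last exact: leq_expr.
  rewrite -(leq_pmul2r Ap).
  have e : 4 * A ^ (3 * A) * A = A ^ (3 * A) * (4 * A) by ring.
  by rewrite /L e.
have -> : N = L * M + (N - L * M) by rewrite subnKC.
rewrite !expnD (expnM A) (expnM B).
have hKM : K * 2 ^ M <= 4 ^ M.
  have -> : 4 = 2 * 2 by [].
  rewrite expnMn leq_mul2r; apply/orP; right.
  exact: leq_trans hK (ltnW (ltn_expl _ (isT : 1 < 2))).
rewrite mulnA.
apply: leq_mul; last exact: leq_expr (ltnW AB).
apply: (leq_trans (n := 4 ^ M * (A ^ L) ^ M)); first by rewrite leq_mul2r hKM orbT.
by rewrite -expnMn leq_expr.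
Qed.

Lemma sum_weight (T : finType) (x y : nat) :
  \sum_(f : {ffun T -> bool}) x ^ #|[set i | f i]| * y ^ (#|T| - #|[set i | f i]|)
  = (x + y) ^ #|T|.
Proof.
have -> : (x + y) ^ #|T| = \prod_(i : T) \sum_(b : bool) (if b then x else y).
  by rewrite -prod_nat_const; apply: eq_bigr => i _; rewrite big_bool.
rewrite bigA_distr_bigA; apply: eq_bigr => f _.
rewrite (bigID (fun i => f i)) /=.
rewrite [X in _ = X * _](eq_bigr (fun=> x)); last by move=> i ->.
rewrite [X in _ = _ * X](eq_bigr (fun=> y)); last by move=> i hi; rewrite (negbTE hi).
have e1 : \prod_(i | f i) x = x ^ #|[set i | f i]|.
  by rewrite -prod_nat_const; apply: eq_bigl => i; rewrite inE.
have e2 : \prod_(i | ~~ f i) y = y ^ (#|T| - #|[set i | f i]|).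
  rewrite -[[set i | f i]]setCK -cardsCs -prod_nat_const.
  by apply: eq_bigl => i; rewrite !inE.
by rewrite e1 e2.
Qed.


Lemma bad_count (T : finType) m u v : u <= v ->
 #|[set f : {ffun T -> bool} | 2 * m * #|[set i | f i]| <= (m - 2) * #|T|]|
   * (u ^ ((m - 2) * #|T|) * v ^ (2 * m * #|T|))
   <= (v ^ (m - 2) * (u ^ (2 * m) + v ^ (2 * m))) ^ #|T|.
Proof.
move=> uv.
set N := #|T|.
rewrite -sum_nat_const.
apply: (@leq_trans (\sum_(f : {ffun T -> bool}) v ^ ((m - 2) * N) *
   ((u ^ (2 * m)) ^ #|[set i | f i]| * (v ^ (2 * m)) ^ (N - #|[set i | f i]|)))).
  rewrite [X in _ <= X](bigID (mem [set f : {ffun T -> bool} | 2 * m * #|[set i | f i]| <= (m - 2) * N])) /=.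
  apply: leq_trans (leq_addr _ _); apply: leq_sum => f; rewrite inE => h.
  set w := #|[set i | f i]| in h *.
  have wN : w <= N by apply: max_card.
  rewrite -!expnM.
  have -> : (m - 2) * N = ((m - 2) * N - 2 * m * w) + 2 * m * w by rewrite subnK.
  rewrite !expnD.
  have -> : v ^ (2 * m * N) = v ^ (2 * m * w) * v ^ (2 * m * (N - w)).
    by rewrite -expnD -mulnDr subnKC.
  have h1 := leq_expr ((m - 2) * N - 2 * m * w) uv.
  move: h1; move: (u ^ _) (v ^ ((m - 2) * N - 2 * m * w)) (u ^ (2 * m * w)) (v ^ (2 * m * w)) (v ^ (2 * m * (N - w))) => A B C D E h1.
  have -> : A * C * (D * E) = C * D * E * A by ring.
  have -> : B * D * (C * E) = C * D * E * B by ring.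
  by rewrite leq_mul2l h1 orbT.
rewrite -big_distrr /= sum_weight.
by rewrite expnMn -expnM mulnC.
Qed.

Import Order.TTheory GRing.Theory Num.Theory.
Local Open Scope ring_scope.

Lemma sum_subsets (R : comPzRingType) (U : finType) (G : {set U}) (p q : R) :
  \sum_(X : {set U}) (if X \subset G then p ^+ #|X| * q ^+ (#|G| - #|X|)%N else 0)
  = (p + q) ^+ #|G|.
Proof.
pose F (i : U) (b : bool) : R :=
  if i \in G then (if b then p else q) else (if b then 0 else 1).
have -> : (p + q) ^+ #|G| = \prod_(i : U) \sum_(b : bool) F i b.
  rewrite (bigID (fun i => i \in G)) /= -prodr_const.
  rewrite [X in _ = _ * X]big1 ?mulr1; last by move=> i /negbTE hi; rewrite big_bool /F hi /= add0r.
  by apply: eq_bigr => i hi; rewrite big_bool /F hi.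
rewrite bigA_distr_bigA /=.
rewrite (reindex (fun X : {set U} => [ffun i => i \in X])) /=; last first.
  exists (fun f : {ffun U -> bool} => [set i | f i]) => [X _ | f _].
    by apply/setP => i; rewrite inE ffunE.
  by apply/ffunP => i; rewrite ffunE inE.
apply: eq_bigr => X _.
under eq_bigr do rewrite ffunE.
case: ifP => [sXG | /negbT nsXG].
- rewrite (bigID (fun i => i \in G)) /=.
  rewrite [X in _ = _ * X]big1 ?mulr1; last first.
    move=> i /negbTE hi; rewrite /F hi.
    by case: ifP => // iX; move: (subsetP sXG i iX); rewrite hi.
  rewrite (bigID (fun i => i \in X)) /=.
  rewrite (eq_bigr (fun=> p)); last by move=> i /andP [hG hX]; rewrite /F hG hX.
  rewrite [X in _ = _ * X](eq_bigr (fun=> q)); last by move=> i /andP [hG /negbTE hX]; rewrite /F hG hX.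
  rewrite !prodr_const; congr (_ * _); congr (_ ^+ _).
  + apply: eq_card => i; rewrite [in RHS]unfold_in /=.
    by case iX: (i \in X); rewrite ?andbF ?andbT ?(subsetP sXG).
  + have -> : #|X| = #|G :&: X| by rewrite (setIidPr sXG).
    rewrite -cardsD; apply: eq_card => i; rewrite [in RHS]unfold_in /= !inE.
    by rewrite andbC.
- case/subsetPn: nsXG => i iX niG.
  by rewrite (bigD1 i) //= /F (negbTE niG) iX mul0r.
Qed.

Lemma prob_lower (R : realFieldType) n k (p : R) (nice : pred {ffun ksub n k -> bool})
  (E : {ffun ksub n k -> bool} -> {set ksub n k.+1} -> bool) :
  0 <= p <= 1 ->
  (forall a (X : {set ksub n k.+1}), nice a -> X \subset good a -> E a X) ->
  (2%:R^-1) ^+ #|{: ksub n k}| * #|[set a | nice a]|%:R <= Prob p E.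
Proof.
case/andP=> p0 p1 hE.
rewrite /Prob.
have w0 : forall a (X : {set ksub n k.+1}), 0 <= weight p a X.
  move=> a X; rewrite /weight; apply: mulr_ge0; first by apply: exprn_ge0; rewrite invr_ge0 ler0n.
  case: ifP => // _; apply: mulr_ge0; apply: exprn_ge0 => //; by rewrite subr_ge0.
apply: (@le_trans _ _ (\sum_(a : {ffun ksub n k -> bool}) if nice a then (2%:R^-1) ^+ #|{: ksub n k}| else 0)).
  by rewrite -big_mkcond /= sumr_const cardsE mulr_natr.
apply: ler_sum => a _.
case: ifP => na; last by apply: sumr_ge0 => X _; apply: mulr_ge0 => //; rewrite ler0n.
have -> : \sum_(X : {set ksub n k.+1}) weight p a X * (E a X)%:R = \sum_(X : {set ksub n k.+1}) weight p a X.
  apply: eq_bigr => X _.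
  case sX: (X \subset good a); first by rewrite hE // mulr1.
  by rewrite /weight sX mulr0 mul0r.
rewrite /weight -mulr_sumr sum_subsets subrKC expr1n mulr1.
by [].
Qed.

Lemma addb_card (T : finType) (P : pred T) (b : T -> bool) :
  \big[addb/false]_(i | P i) b i = odd #|[set i | P i && b i]|.
Proof.
have e : \sum_(i | P i) (b i : nat) = #|[set i | P i && b i]|.
  rewrite cardsE -sum1_card big_mkcondr /=.
  by apply: eq_bigr => i _; case: (b i).
rewrite -e (big_morph odd oddD (_ : odd 0 = false)) //.
by apply: eq_bigr => i _; case: (b i).
Qed.

Lemma cocycle_good n k (a : {ffun ksub n k -> bool}) (X : {set ksub n k.+1}) :
  X \subset good a -> cocycle_on X a.
Proof.
move=> sX; apply/forall_inP => H HX.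
move: (subsetP sX H HX); rewrite inE => hev.
by rewrite /cobound ffunE addb_card (negbTE hev).
Qed.

Lemma classnorm_le R n k (a : {ffun ksub n k -> bool}) g :
  classnorm R a <= cnorm R (addc a (@cobound n k.-1 k g)).
Proof.
rewrite /classnorm (bigD1 g) //=.
by rewrite ge_min lexx.
Qed.


Lemma le_classnorm (R : realFieldType) n k (a : {ffun ksub n k -> bool}) (c : R) :
  c <= 1 -> (forall g, c <= cnorm R (addc a (@cobound n k.-1 k g))) -> c <= classnorm R a.
Proof.
move=> c1 h; rewrite /classnorm.
by apply: (big_ind (fun x => c <= x)) => // x y hx hy; rewrite le_min hx hy.
Qed.

Lemma addcKK n k (f g : {ffun ksub n k -> bool}) : addc (addc f g) g = f.
Proof. by apply/ffunP => x; rewrite !ffunE addbK. Qed.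

Lemma addcK n k (g : {ffun ksub n k -> bool}) : involutive (fun f => addc f g).
Proof. by move=> f; rewrite addcKK. Qed.

Lemma notnice_count (R : realFieldType) n k (c : R) : c <= 1 ->
  (#|[set a : {ffun ksub n k -> bool} | ~~ (c <= classnorm R a)%R]|
   <= 2 ^ #|{: ksub n k.-1}| * #|[set f : {ffun ksub n k -> bool} | (cnorm R f < c)%R]|)%N.
Proof.
move=> c1.
set S := [set a | _].
pose I (a : {ffun ksub n k -> bool}) (g : {ffun ksub n k.-1 -> bool}) : nat :=
  ((cnorm R (addc a (@cobound n k.-1 k g)) < c)%R : bool).
apply: (@leq_trans (\sum_(a : {ffun ksub n k -> bool}) \sum_g I a g)).
  rewrite -sum1_card.
  apply: (@leq_trans (\sum_(a in S) \sum_g I a g)); last first.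
    by rewrite [X in (_ <= X)%N](bigID (mem S)) /= leq_addr.
  apply: leq_sum => a; rewrite inE => hn.
  have [g hg] : exists g, cnorm R (addc a (@cobound n k.-1 k g)) < c.
    apply/existsP; apply: contraR hn => /existsPn hall.
    apply: le_classnorm => // g; move: (hall g); by rewrite -leNgt.
  by rewrite (bigD1 g) //= /I hg.
rewrite exchange_big /=.
have e : forall g, (\sum_a I a g = #|[set f : {ffun ksub n k -> bool} | (cnorm R f < c)%R]|)%N.
  move=> g; rewrite cardsE -sum1_card big_mkcond /=.
  rewrite (reindex_inj (inv_inj (@addcK n k (@cobound n k.-1 k g)))) /=.
  rewrite [RHS]big_mkcond /=; apply: eq_bigr => a _.
  by rewrite /I addcKK unfold_in /=.
rewrite (eq_bigr _ (fun g _ => e g)) sum_nat_const card_ffun card_bool.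
by [].
Qed.
Lemma bin_lb n j : (n.+1 <= 'C(n + j.+1, j.+1))%N.
Proof.
elim: n => [|n IH]; first by rewrite add0n binn.
rewrite addSn binS.
have : (0 < 'C(n + j.+1, j))%N by rewrite bin_gt0; lia.
lia.
Qed.

Lemma card_ksub n j : #|{: ksub n j}| = 'C(n, j).
Proof.
rewrite card_sig -[in RHS](card_ord n) -card_draws.
apply: eq_card => S; rewrite !inE.
by [].
Qed.

Lemma addc_self n k (f : {ffun ksub n k -> bool}) (R : realFieldType) : cnorm R (addc f f) = 0.
Proof.
rewrite /cnorm.
have -> : [set F | addc f f F] = set0 by apply/setP => F; rewrite !inE ffunE addbb.
by rewrite cards0 mul0r.
Qed.

Lemma arith_n k n A K : (2 <= k)%N -> (k * (3 * A) + K + k <= n)%N ->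
  (k * (3 * A) <= n - k.-1)%N /\ (0 < k)%N /\ k.-2.+1 = k.-1 /\
     (n - k.-1 + k.-1 = n)%N /\ (K <= n - k.-1)%N /\ (k <= n)%N.
Proof. move=> h1 h2; repeat split; lia. Qed.

Lemma arith_m m : (4 <= m)%N -> (2 <= m)%N /\ (1 < 2 * m * m)%N.
Proof.
move=> h; have m0 : (0 < m)%N by apply: leq_trans h.
split; first by apply: leq_trans h.
by rewrite -mulnA leq_pmulr // muln_gt0 m0.
Qed.

Theorem mainTheorem13 (R : archiRealFieldType) (k : nat) (hk : (2 <= k)%N)
  (p : nat -> R) (hp : forall n, 0 <= p n <= 1)
  (eps : R) (heps : 0 < eps) :
  forall eta : R, 0 < eta ->
  exists N : nat, forall n : nat, (N <= n)%N ->
    1 - eta <= Prob (p n)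
      (fun (a : {ffun ksub n k -> bool}) (X : {set ksub n k.+1}) =>
         [&& cocycle_on X a,
             2%:R^-1 - eps <= classnorm R a
           & Hnonzero X]).
Proof.
move=> eta heta.
set b := Num.bound (eps^-1).
have hb : eps^-1 < b%:R by apply: archi_boundP; rewrite invr_ge0 ltW.
set m := (b + 4)%N.
have hm4 : (4 <= m)%N by rewrite /m leq_addl.
have mpos : (0:R) < m%:R by rewrite ltr0n /m addn_gt0 orbT.
have hme : m%:R^-1 <= eps.
  rewrite invf_ple ?posrE //; apply: ltW; apply: (lt_le_trans hb).
  by rewrite ler_nat /m leq_addr.
have m4 : m%:R^-1 <= (4%:R : R)^-1.
  by rewrite lef_pV2 ?posrE ?ltr0n // ler_nat.
set c : R := 2%:R^-1 - m%:R^-1.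
have hc1 : c <= 1.
  rewrite /c; have : 0 <= m%:R^-1 :> R by rewrite invr_ge0 ltW.
  have : (2%:R^-1 : R) <= 1 by rewrite invf_le1 ?ler1n ?ltr0n.
  lra.
have hc0 : 0 < c.
  rewrite /c; have : (4%:R^-1 : R) < 2%:R^-1 by rewrite ltf_pV2 ?posrE ?ltr0n // ltr_nat.
  lra.
have hce : 2%:R^-1 - eps <= c by rewrite /c; lra.
set K := Num.bound (eta^-1).
have hK : eta^-1 < K%:R by apply: archi_boundP; rewrite invr_ge0 ltW.
have Kpos : (0 < K)%N.
  by rewrite -(ltr0n R); apply: lt_trans hK; rewrite invr_gt0.
have hKe : K%:R^-1 < eta by rewrite invf_plt ?posrE ?ltr0n.
clearbody b K.
have [hm2 tpos] := arith_m hm4.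
have AB := keyAB hm4 (erefl (2 * m * m)%N).
move: (2 * m * m)%N tpos AB => t tpos AB.
set A := (t ^ (m - 2) * (t.-1 ^ (2 * m) + t ^ (2 * m)))%N in AB *.
set B := (2 * (t.-1 ^ (m - 2) * t ^ (2 * m)))%N in AB *.
have t0 : (0 < t)%N := ltnW tpos.
have t1 : (0 < t.-1)%N by rewrite -ltnS prednK.
have Apos : (0 < A)%N by rewrite /A muln_gt0 addn_gt0 !expn_gt0 t0 t1.
have hBX : forall N, (B ^ N = 2 ^ N * (t.-1 ^ ((m - 2) * N) * t ^ (2 * m * N)))%N.
  by move=> N; rewrite /B expnMn expnMn -!expnM.
have hbc0 : forall (T : finType), (#|[set f : {ffun T -> bool} |
     (2 * m * #|[set i | f i]| <= (m - 2) * #|T|)%N]| *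
     (t.-1 ^ ((m - 2) * #|T|) * t ^ (2 * m * #|T|)) <= A ^ #|T|)%N.
  by move=> T; apply: bad_count; rewrite leq_pred.
have Xpos : forall N, (0 < t.-1 ^ ((m - 2) * N) * t ^ (2 * m * N))%N.
  by move=> N; rewrite muln_gt0 !expn_gt0 t0 t1.
clearbody A B.
exists (k * (3 * A) + K + k)%N => n hn.
set N := #|{: ksub n k}|.
set M := #|{: ksub n k.-1}|.
have [a1 [a2 [a3 [a4 [a5 a6]]]]] := arith_n hk hn.
have eN : N = 'C(n, k) by apply: card_ksub.
have eM : M = 'C(n, k.-1) by apply: card_ksub.
have hkN : (k * N = (n - k.-1) * M)%N.
  by rewrite eN eM; have := mul_bin_left n k.-1; rewrite prednK.
have hLM : (3 * A * M <= N)%N.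
  rewrite -(leq_pmul2l a2).
  by rewrite hkN mulnA leq_mul2r a1 orbT.
have hKM : (K <= M)%N.
  have := bin_lb (n - k.-1) (k.-2).
  rewrite a3 a4 -eM => h.
  exact: leq_trans a5 (ltnW h).
have hasym := asym Apos AB hLM hKM.
have Npos : (0 < N)%N by rewrite eN bin_gt0.
set badN := [set f : {ffun ksub n k -> bool} |
   (2 * m * #|[set i | f i]| <= (m - 2) * N)%N].
have key1 : (K * 2 ^ M * #|badN| <= 2 ^ N)%N.
  rewrite -(leq_pmul2r (Xpos N)) -hBX; apply: leq_trans hasym.
  by rewrite -mulnA leq_mul2l hbc0 orbT.
set badR := [set f : {ffun ksub n k -> bool} | cnorm R f < c].
have sub : badR \subset badN.
  apply/subsetP => f; rewrite !inE => hf.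
  move: hf; rewrite /cnorm -/N.
  set w := #|[set F | f F]|.
  have NR : (0 : R) < N%:R by rewrite ltr0n.
  rewrite ltr_pdivrMr // => hf.
  rewrite -(ler_nat R) !natrM natrB //.
  apply: ltW.
  have e : 2%:R * m%:R * (c * N%:R) = (m%:R - 2) * N%:R.
    rewrite /c; field; by rewrite gt_eqF.
  have h2m : (0 : R) < 2%:R * m%:R by apply: mulr_gt0; first rewrite ltr0n.
  by rewrite -e (ltr_pM2l h2m).
have key2 : (K * #|[set a : {ffun ksub n k -> bool} | ~~ (c <= classnorm R a)%R]| <= 2 ^ N)%N.
  apply: (leq_trans _ key1); rewrite -mulnA leq_mul2l; apply/orP; right.
  apply: (leq_trans (@notnice_count R n k c hc1)).
  rewrite -/M.
  by rewrite leq_mul2l subset_leq_card ?orbT.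
have hE : forall a (X : {set ksub n k.+1}), c <= classnorm R a -> X \subset good a ->
    [&& cocycle_on X a, 2%:R^-1 - eps <= classnorm R a & Hnonzero X].
  move=> a X na sX; rewrite cocycle_good // (le_trans hce na) /=.
  apply/existsP; exists a; rewrite cocycle_good //=.
  apply/forallP => g; apply/eqP => ag.
  have := @classnorm_le R n k a g; rewrite -ag addc_self => h.
  by have := lt_le_trans hc0 (le_trans na h); rewrite ltxx.
have hP := prob_lower (nice := fun a => c <= classnorm R a) (hp n) hE.
apply: le_trans hP.
set S := [set a | _].
set Z := #|[set a : {ffun ksub n k -> bool} | ~~ (c <= classnorm R a)%R]| in key2 *.
have hcard : (#|S| + Z = 2 ^ N)%N.
  have -> : Z = #|~: S|.
    rewrite /Z (_ : [set a : {ffun ksub n k -> bool} | ~~ (c <= classnorm R a)%R] = ~: S) //.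
    by apply/setP => a; rewrite !inE.
  by rewrite cardsC card_ffun card_bool.
have ZP : (Z <= 2 ^ N)%N by rewrite -hcard leq_addl.
have -> : #|S| = (2 ^ N - Z)%N by rewrite -hcard addnK.
have P0 : (0 : R) < (2 ^ N)%:R by rewrite ltr0n expn_gt0.
rewrite natrB // -/N exprVn -natrX mulrBr mulVf ?gt_eqF //.
have : (Z%:R / (2 ^ N)%:R : R) <= K%:R^-1.
  rewrite ler_pdivrMr // ler_pdivlMl ?ltr0n // -natrM ler_nat.
  exact: key2.
rewrite mulrC => h; rewrite lerD2l lerN2.
exact: le_trans h (ltW hKe).
Qed.
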